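(* Let $G$ be a nearest point graph on $n=pq$ vertices with at least one edge. Then $\rho(G)$ is separable in $\mathbb{C}^p_A\otimes\mathbb{C}^q_B$ if and only if $\Delta(G)=\Delta(G^{\Gamma_B})$.
   Context: A nearest point graph: consider a rectangular lattice of $pq$ points in $p$ rows and $q$ columns, adjacent points in a row or column at distance $1$; the vertex in row $i$, column $j$ is labelled $u_iw_j$. A nearest point graph is a simple graph on these vertices all of whose edges join points at Euclidean distance $1$ or $\sqrt2$, i.e. every edge $\{u_iw_j,u_{i'}w_{j'}\}$ satisfies $(i-i')^2+(j-j')^2\in\{1,2\}$. For a simple graph $G=(V,E)$: $M(G)$ is the adjacency matrix, $\Delta(G)$ the diagonal degree matrix, $L(G)=\Delta(G)-M(G)$, and $\rho(G)=\frac{1}{2|E|}L(G)$. Vertex $u_iw_j$ is identified with $|u_i\rangle\otimes|w_j\rangle$, where $\{|u_i\rangle\}$, $\{|w_j\rangle\}$ are orthonormal bases of $\mathbb{C}^p_A$, $\mathbb{C}^q_B$. The partial transpose $G^{\Gamma_B}=(V,E')$ has $\{u_iw_j,u_kw_l\}\in E'$ iff $\{u_iw_l,u_kw_j\}\in E$. Separable means a convex combination of product states. *)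

(* Defs.v *)
From HB Require Import structures.
From mathcomp Require Import all_boot all_order all_algebra.
Set Implicit Arguments. Unset Strict Implicit. Unset Printing Implicit Defensive.
Import Order.TTheory GRing.Theory Num.Theory.
Local Open Scope ring_scope.

(* Linear operators on C^I (I a finite index type, the orthonormal basis),
   written as their matrix entries in that basis. *)
Definition op (C : Type) (I : finType) := I -> I -> C.

Section Ops.
Variable C : numClosedFieldType.

Definition hermitian (I : finType) (M : op C I) : Prop :=
  forall i j, M j i = (M i j)^*.

Definition psd (I : finType) (M : op C I) : Prop :=
  hermitian M /\ forall x : I -> C, 0 <= \sum_i \sum_j (x i)^* * M i j * x j.

Definition trace (I : finType) (M : op C I) : C := \sum_i M i i.

Definition density (I : finType) (M : op C I) : Prop := psd M /\ trace M = 1.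

(* tensor (Kronecker) product: |u_i> (x) |w_j> is the basis vector (i,j) *)
Definition tensor (I J : finType) (A : op C I) (B : op C J) : op C (I * J)%type :=
  fun x y => A x.1 y.1 * B x.2 y.2.

Definition separable (p q : nat) (rho : op C ('I_p * 'I_q)%type) : Prop :=
  exists (N : nat) (w : 'I_N -> C) (rA : 'I_N -> op C 'I_p) (rB : 'I_N -> op C 'I_q),
    [/\ forall k, 0 <= w k,
        \sum_k w k = 1,
        forall k, density (rA k) /\ density (rB k)
      & forall x y, rho x y = \sum_k w k * tensor (rA k) (rB k) x y].
End Ops.

(* Vertices: u_i w_j  ~  (i, j) : 'I_p * 'I_q.  A simple graph is a symmetric
   irreflexive adjacency relation. *)
Definition vert (p q : nat) := ('I_p * 'I_q)%type.

Definition simple_graph (V : finType) (e : rel V) : Prop :=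
  (forall x, ~~ e x x) /\ (forall x y, e x y = e y x).

Definition sqdist (p q : nat) (x y : vert p q) : nat :=
  ((((x.1 : nat) - y.1) + (y.1 - x.1)) ^ 2 + (((x.2 : nat) - y.2) + (y.2 - x.2)) ^ 2)%N.

Definition nearest_point_graph (p q : nat) (e : rel (vert p q)) : Prop :=
  simple_graph e /\ forall x y, e x y -> sqdist x y = 1%N \/ sqdist x y = 2%N.

Definition edges (V : finType) (e : rel V) : {set {set V}} :=
  [set [set x.1; x.2] | x in [set x : V * V | e x.1 x.2]].

Definition deg (V : finType) (e : rel V) (x : V) : nat := #|[set y | e x y]|.

Definition laplacian (C : numClosedFieldType) (V : finType) (e : rel V) : op C V :=
  fun x y => (if x == y then (deg e x)%:R else 0) - (if e x y then 1 else 0).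

Definition rhoG (C : numClosedFieldType) (V : finType) (e : rel V) : op C V :=
  fun x y => laplacian C e x y / (2 * #|edges e|)%:R.

Definition ptrans (p q : nat) (e : rel (vert p q)) : rel (vert p q) :=
  fun x y => e (x.1, y.2) (y.1, x.2).

(* Main.v *)
Require Import Defs.
From HB Require Import structures.
From mathcomp Require Import all_boot all_order all_algebra.
From mathcomp Require Import zify ring.
Import Order.TTheory GRing.Theory Num.Theory.

Lemma sqdist_cases (a1 y1 a2 y2 : nat) :
  (((a1 - y1) + (y1 - a1)) ^ 2 + ((a2 - y2) + (y2 - a2)) ^ 2 = 1
  \/ ((a1 - y1) + (y1 - a1)) ^ 2 + ((a2 - y2) + (y2 - a2)) ^ 2 = 2)%N ->
  y1 = a1 \/ y2 = a2 \/ (y1 = a1.+1 /\ y2 = a2.+1) \/ (y1.+1 = a1 /\ y2.+1 = a2) \/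
     (y1 = a1.+1 /\ y2.+1 = a2) \/ (y1.+1 = a1 /\ y2 = a2.+1).
Proof. rewrite -!mulnn => -[] H; nia. Qed.

Section Graph.
Variables (p q : nat) (e : rel (vert p q)).
Hypothesis He : nearest_point_graph e.
Hypothesis Hdeg : forall v, deg e v = deg (ptrans e) v.

Lemma e_sym x y : e x y = e y x.
Proof. by case: He => [[_ ->]]. Qed.

Lemma e_irr x : e x x = false.
Proof. by case: He => [[/(_ x) /negbTE ->]]. Qed.

Lemma claim_all n (a : vert p q) : (a.1 + a.2 < n)%N -> forall y, e a y = ptrans e a y.
Proof.
elim: n a => [|n IH] [a1 a2] //= Hn.
have H : forall y : vert p q, ~ ((y.1 : nat) = a1.+1 /\ (y.2 : nat) = a2.+1) ->
   e (a1, a2) y = ptrans e (a1, a2) y.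
  move=> [y1 y2] /= Hnd; rewrite /ptrans /=.
  case E1: (e (a1, a2) (y1, y2)); case E2: (e (a1, y2) (y1, a2)) => //.
  - have [_ /(_ _ _ E1)] := He; rewrite /sqdist /= => /sqdist_cases.
    move=> [/val_inj Ey|[/val_inj Ey|[Hd|[[H1 H2]|[[H1 H2]|[H1 H2]]]]]].
    + by subst; rewrite e_sym E1 in E2.
    + by subst; rewrite E1 in E2.
    + by case: Hnd.
    + have Hlt : (y1 + y2 < n)%N by lia.
      have := IH (y1, y2) Hlt (a1, a2); rewrite /ptrans /=.
      by rewrite e_sym E1 e_sym E2.
    + have Hlt : (a1 + y2 < n)%N by lia.
      have := IH (a1, y2) Hlt (y1, a2); rewrite /ptrans /=.
      by rewrite E2 E1.
    + have Hlt : (y1 + a2 < n)%N by lia.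
      have := IH (y1, a2) Hlt (a1, y2); rewrite /ptrans /=.
      by rewrite e_sym E2 e_sym E1.
  - have [_ /(_ _ _ E2)] := He; rewrite /sqdist /= => Hs.
    have {Hs}: ((a1 - y1 + (y1 - a1)) ^ 2 + (a2 - y2 + (y2 - a2)) ^ 2 = 1
        \/ (a1 - y1 + (y1 - a1)) ^ 2 + (a2 - y2 + (y2 - a2)) ^ 2 = 2)%N.
      by rewrite [(a2 - y2 + _)%N]addnC.
    move=> /sqdist_cases.
    move=> [/val_inj Ey|[/val_inj Ey|[Hd|[[H1 H2]|[[H1 H2]|[H1 H2]]]]]].
    + by subst; rewrite e_sym E1 in E2.
    + by subst; rewrite E1 in E2.
    + by case: Hnd.
    + have Hlt : (y1 + y2 < n)%N by lia.
      have := IH (y1, y2) Hlt (a1, a2); rewrite /ptrans /=.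
      by rewrite e_sym E1 e_sym E2.
    + have Hlt : (a1 + y2 < n)%N by lia.
      have := IH (a1, y2) Hlt (y1, a2); rewrite /ptrans /=.
      by rewrite E2 E1.
    + have Hlt : (y1 + a2 < n)%N by lia.
      have := IH (y1, a2) Hlt (a1, y2); rewrite /ptrans /=.
      by rewrite e_sym E2 e_sym E1.
move=> y; case: (boolP [&& (y.1 : nat) == a1.+1 & (y.2 : nat) == a2.+1]); last first.
  by move=> Hy; apply: H => -[H1 H2]; rewrite H1 H2 !eqxx in Hy.
move=> /andP [/eqP Y1 /eqP Y2].
have := Hdeg (a1, a2); rewrite /deg (cardsD1 y) (cardsD1 y [set _ | _]) => /eqP.
have -> : [set y0 | e (a1, a2) y0] :\ y = [set y0 | ptrans e (a1, a2) y0] :\ y.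
  apply/setP => z; rewrite !inE; case: eqP => //= Hz; apply: H => -[H1 H2].
  apply: Hz; move: Y1 Y2 H1 H2; case: z => [z1 z2]; case: y => [y1 y2] /= U1 U2 U3 U4.
  by congr pair; apply: val_inj; rewrite /= ?U1 ?U2 ?U3 ?U4.
by rewrite eqn_add2r !inE; case: (e _ y); case: (ptrans e _ y).
Qed.

Lemma ptrans_eq x y : ptrans e x y = e x y.
Proof. by rewrite -(@claim_all (x.1 + x.2).+1 x (leqnn _)). Qed.
End Graph.

Local Open Scope ring_scope.
Set Implicit Arguments. Unset Strict Implicit.

Section Lin.
Variable C : numClosedFieldType.

Definition ind (b : bool) : C := if b then 1 else 0.

Lemma conj_ind b : (ind b)^* = ind b.
Proof. by case: b; rewrite /ind ?conjC1 ?conjC0. Qed.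

Lemma sum_ind (I : finType) (i0 : I) (f : I -> C) : \sum_i ind (i == i0) * f i = f i0.
Proof.
rewrite (bigD1 i0) //= eqxx mul1r big1 ?addr0 // => i /negbTE Hi.
by rewrite /ind Hi mul0r.
Qed.

Lemma sum_ind' (I : finType) (i0 : I) (f : I -> C) : \sum_i f i * ind (i == i0) = f i0.
Proof. by rewrite -(sum_ind i0); apply: eq_bigr => i _; rewrite mulrC. Qed.

Definition qf (I : finType) (M : op C I) (x : I -> C) :=
  \sum_i \sum_j (x i)^* * M i j * x j.

Lemma qf_expand (I : finType) (M : op C I) a b i0 :
  qf M (fun i => a + b * ind (i == i0)) =
  a^* * a * (\sum_i \sum_j M i j) + a^* * b * (\sum_i M i i0)
  + b^* * a * (\sum_j M i0 j) + b^* * b * M i0 i0.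
Proof.
rewrite /qf.
have E : forall i j, (a + b * ind (i == i0))^* * M i j * (a + b * ind (j == i0)) =
   a^* * a * M i j + a^* * b * (M i j * ind (j == i0)) + b^* * a * (ind (i == i0) * M i j)
   + b^* * b * (ind (i == i0) * (M i j * ind (j == i0))).
  by move=> i j; rewrite rmorphD rmorphM /= conj_ind; ring.
under eq_bigr => i _ do under eq_bigr => j _ do rewrite E.
under eq_bigr => i _ do rewrite !big_split /= -!mulr_sumr.
rewrite !big_split /= -!mulr_sumr.
congr (_ + _ + _ + _); congr (_ * _).
- by apply: eq_bigr => i _; rewrite sum_ind'.
- by rewrite sum_ind.
- by under eq_bigr => i _ do rewrite sum_ind'; rewrite sum_ind.
Qed.

Lemma psd_diag_ge0 (I : finType) (M : op C I) i0 : psd M -> 0 <= M i0 i0.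
Proof.
move=> [_ /(_ (fun i => 0 + 1 * ind (i == i0)))].
rewrite -/(qf M (fun i => 0 + 1 * ind (i == i0))) qf_expand.
by rewrite conjC0 conjC1 !mul0r !add0r !mul1r !mul0r !add0r.
Qed.

Lemma psd_sum_ge0 (I : finType) (M : op C I) : psd M -> 0 <= \sum_i \sum_j M i j.
Proof.
case: (boolP (#|I| == 0)%N) => [/eqP HI|].
  by rewrite big_pred0 // => i; have := card0_eq HI i; rewrite !inE.
rewrite -lt0n => /card_gt0P [i0 _].
move=> [_ /(_ (fun i => 1 + 0 * ind (i == i0)))].
rewrite -/(qf M (fun i => 1 + 0 * ind (i == i0))) qf_expand.
by rewrite conjC0 conjC1 !mul0r !mulr0 !addr0 !mul1r mul0r addr0.
Qed.

Lemma psd_row0 (I : finType) (M : op C I) : psd M ->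
  \sum_i \sum_j M i j = 0 -> forall i, \sum_j M i j = 0.
Proof.
move=> HM S0 i0.
set r := \sum_j M i0 j; set mi := M i0 i0.
have Hm : 0 <= mi by apply: psd_diag_ge0.
have Hcol : \sum_i M i i0 = r^*.
  rewrite /r rmorph_sum; apply: eq_bigr => i _; by case: HM => [H _]; rewrite H.
have Hmr : mi^* = mi by apply: conj_Creal; apply: ger0_real.
have := HM.2 (fun i => (mi + 1) + (- r) * ind (i == i0)).
rewrite -/(qf M (fun i => (mi + 1) + (- r) * ind (i == i0))) qf_expand S0 Hcol -/r -/mi.
rewrite !rmorphD rmorphN /= Hmr conjC1.
have -> : (mi + 1) * (mi + 1) * 0 + (mi + 1) * - r * r^* + (- r^* * (mi + 1) * r)
   + (- r^* * - r * mi) = - (r * r^* * (mi + 2)) by ring.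
rewrite oppr_ge0 => Hle.
have Hge : 0 <= r * r^* * (mi + 2).
  by apply: mulr_ge0; [apply: mul_conjC_ge0 | apply: addr_ge0].
have : r * r^* * (mi + 2) = 0 by apply/eqP; rewrite eq_le Hle Hge.
move/eqP; rewrite mulf_eq0 => /orP [|]; first by rewrite mul_conjC_eq0 => /eqP.
have H2 : 0 < mi + 2 by apply: ltr_wpDl.
by rewrite gt_eqF.
Qed.


Definition cone (p q : nat) (r : op C ('I_p * 'I_q)%type) :=
  exists N (w : 'I_N -> C) (rA : 'I_N -> op C 'I_p) (rB : 'I_N -> op C 'I_q),
    [/\ forall k, 0 <= w k, forall k, density (rA k) /\ density (rB k)
      & forall x y, r x y = \sum_k w k * tensor (rA k) (rB k) x y].

Lemma sum_pair2 (I J : finType) (f : I -> C) (g : J -> C) :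
  \sum_(w : (I * J)%type) f w.1 * g w.2 = (\sum_i f i) * (\sum_j g j).
Proof. by rewrite big_distrlr pair_bigA. Qed.

Lemma sum_pair4 (I J : finType) (A : op C I) (B : op C J) :
  \sum_(z : (I * J)%type) \sum_(w : (I * J)%type) A z.1 w.1 * B z.2 w.2 =
  (\sum_i \sum_i' A i i') * (\sum_j \sum_j' B j j').
Proof.
rewrite -(pair_bigA _ (fun i j => \sum_(w : (I * J)%type) A i w.1 * B j w.2)) /=.
under eq_bigr => i _ do under eq_bigr => j _ do
  rewrite -(pair_bigA _ (fun i' j' => A i i' * B j j')) /=.
rewrite big_distrlr; apply: eq_bigr => i _.
apply: eq_bigr => j _.
by rewrite big_distrlr.
Qed.

Lemma herm_col0 (I : finType) (M : op C I) : Defs.hermitian M ->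
  (forall i, \sum_j M i j = 0) -> forall i, \sum_j M j i = 0.
Proof.
move=> H H0 i; transitivity ((\sum_j M i j)^*); last by rewrite H0 conjC0.
by rewrite rmorph_sum; apply: eq_bigr => j _; rewrite H.
Qed.

Lemma sep_nec (p q : nat) (r : op C ('I_p * 'I_q)%type) : separable r ->
  (forall z, \sum_w r z w = 0) -> forall z, \sum_w r (z.1, w.2) (w.1, z.2) = 0.
Proof.
move=> [N [w [rA [rB [w0 _ Hd Hr]]]]] Hrow.
have S0 : \sum_k w k * ((\sum_i \sum_j rA k i j) * (\sum_i \sum_j rB k i j)) = 0.
  transitivity (\sum_z \sum_w0 r z w0); last by rewrite big1 // => z _; apply: Hrow.
  under [RHS]eq_bigr => z _ do under eq_bigr => w1 _ do rewrite Hr.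
  under [RHS]eq_bigr => z _ do rewrite exchange_big.
  rewrite [RHS]exchange_big; apply: eq_bigr => k _.
  rewrite -sum_pair4 mulr_sumr; apply: eq_bigr => z _.
  by rewrite mulr_sumr.
have Hk : forall k, w k * ((\sum_i \sum_j rA k i j) * (\sum_i \sum_j rB k i j)) = 0.
  move=> k; apply: (psumr_eq0P _ S0) => // k' _.
  have [[HA _] [HB _]] := Hd k'.
  by apply: mulr_ge0 => //; apply: mulr_ge0; apply: psd_sum_ge0.
move=> z; under eq_bigr => w1 _ do rewrite Hr /tensor /=.
rewrite exchange_big big1 // => k _.
rewrite -mulr_sumr (sum_pair2 (fun i => rA k z.1 i) (fun j => rB k j z.2)).
have [[HA _] [HB _]] := Hd k.
move: (Hk k) => /eqP; rewrite !mulf_eq0 => /orP [/eqP -> | /orP [] /eqP H0];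
  first by rewrite mul0r.
- by rewrite (psd_row0 HA H0) mul0r mulr0.
- by rewrite (herm_col0 HB.1 (psd_row0 HB H0)) !mulr0.
Qed.


Lemma split_lshift m n (i : 'I_m) : split (lshift n i) = inl i.
Proof. exact: (unsplitK (inl i)). Qed.
Lemma split_rshift m n (i : 'I_n) : split (rshift m i) = inr i.
Proof. exact: (unsplitK (inr i)). Qed.

Section Cone.
Variables p q : nat.
Implicit Types r : op C ('I_p * 'I_q)%type.

Lemma cone_ext r1 r2 : (forall x y, r1 x y = r2 x y) -> cone r1 -> cone r2.
Proof.
move=> H [N [w [A [B [h d E]]]]]; exists N, w, A, B; split => // x y.
by rewrite -H E.
Qed.

Lemma cone0 r : (forall x y, r x y = 0) -> cone r.
Proof.
move=> H; exists 0%N, (fun _ => 0), (fun _ _ _ => 0), (fun _ _ _ => 0); split.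
- by move=> [].
- by move=> [].
- by move=> x y; rewrite H big_ord0.
Qed.

Lemma coneD r1 r2 : cone r1 -> cone r2 -> cone (fun x y => r1 x y + r2 x y).
Proof.
move=> [N1 [w1 [A1 [B1 [h1 d1 e1]]]]] [N2 [w2 [A2 [B2 [h2 d2 e2]]]]].
exists (N1 + N2)%N, (fun k => match split k with inl i => w1 i | inr j => w2 j end),
  (fun k => match split k with inl i => A1 i | inr j => A2 j end),
  (fun k => match split k with inl i => B1 i | inr j => B2 j end); split.
- by move=> k; case: (split k) => i.
- by move=> k; case: (split k) => i.
- move=> x y; rewrite e1 e2 big_split_ord; congr (_ + _); apply: eq_bigr => i _.
  + by rewrite split_lshift.
  + by rewrite split_rshift.
Qed.

Lemma coneZ c r : 0 <= c -> cone r -> cone (fun x y => c * r x y).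
Proof.
move=> Hc [N [w [A [B [h d E]]]]]; exists N, (fun k => c * w k), A, B; split => //.
- by move=> k; apply: mulr_ge0.
- by move=> x y; rewrite E mulr_sumr; apply: eq_bigr => k _; rewrite mulrA.
Qed.

Lemma cone_sum (I : Type) (s : seq I) (F : I -> op C ('I_p * 'I_q)%type) :
  (forall i, cone (F i)) -> cone (fun x y => \sum_(i <- s) F i x y).
Proof.
move=> HF; elim: s => [|a s IH].
  by apply: cone0 => x y; rewrite big_nil.
apply: cone_ext (coneD (HF a) IH) => x y; by rewrite big_cons.
Qed.

Definition rank1 (I : finType) (a : I -> C) : op C I := fun i j => a i * (a j)^*.

Lemma dens_rank1 (I : finType) (a : I -> C) : \sum_i a i * (a i)^* != 0 ->
  density (fun i j => rank1 a i j / \sum_i a i * (a i)^*).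
Proof.
set t := \sum_i _ => Ht.
have Ht0 : 0 <= t by apply: sumr_ge0 => i _; apply: mul_conjC_ge0.
have Htc : t^* = t by apply: conj_Creal; apply: ger0_real.
split; [split|].
- by move=> i j; rewrite /rank1 rmorphM fmorphV /= Htc rmorphM /= conjCK [(a i)^* * _]mulrC.
- move=> x; clearbody t.
  have Hs : (\sum_i (x i)^* * a i)^* = \sum_j (a j)^* * x j.
    by rewrite rmorph_sum; apply: eq_bigr => j _; rewrite rmorphM /= conjCK mulrC.
  have -> : \sum_i \sum_j (x i)^* * (rank1 a i j / t) * x j =
     (\sum_i (x i)^* * a i) * (\sum_i (x i)^* * a i)^* / t.
    rewrite Hs mulr_suml mulr_suml; apply: eq_bigr => i _.
    rewrite mulr_sumr mulr_suml; apply: eq_bigr => j _; rewrite /rank1.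
    ring.
  by apply: divr_ge0 => //; apply: mul_conjC_ge0.
- by rewrite /trace /rank1 -mulr_suml divff.
Qed.

Lemma sum_conj0 (I : finType) (a : I -> C) : \sum_i a i * (a i)^* = 0 -> forall i, a i = 0.
Proof.
move=> H i; apply/eqP; rewrite -mul_conjC_eq0; apply/eqP.
by apply: (psumr_eq0P _ H) => // j _; apply: mul_conjC_ge0.
Qed.

Lemma cone_rank1 (a : 'I_p -> C) (b : 'I_q -> C) :
  cone (tensor (rank1 a) (rank1 b)).
Proof.
case: (eqVneq (\sum_i a i * (a i)^*) 0) => [/sum_conj0 Ha|Ha].
  by apply: cone0 => x y; rewrite /tensor /rank1 !Ha !mul0r.
case: (eqVneq (\sum_i b i * (b i)^*) 0) => [/sum_conj0 Hb|Hb].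
  by apply: cone0 => x y; rewrite /tensor /rank1 !Hb !mul0r mulr0.
exists 1%N, (fun _ => (\sum_i a i * (a i)^*) * (\sum_i b i * (b i)^*)),
  (fun _ i j => rank1 a i j / \sum_i a i * (a i)^*),
  (fun _ i j => rank1 b i j / \sum_i b i * (b i)^*); split.
- move=> _; apply: mulr_ge0; apply: sumr_ge0 => i _; apply: mul_conjC_ge0.
- by move=> _; split; apply: dens_rank1.
- move=> x y; rewrite big_ord1 /tensor; field.
  by rewrite Ha Hb.
Qed.

Lemma cone_sep r : cone r -> trace r = 1 -> separable r.
Proof.
move=> [N [w [A [B [h d E]]]]] Htr; exists N, w, A, B; split => //.
rewrite -Htr /trace; under [RHS]eq_bigr => z _ do rewrite E.
rewrite exchange_big; apply: eq_bigr => k _.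
rewrite -mulr_sumr /tensor.
rewrite (sum_pair2 (fun i => A k i i) (fun j => B k j j)).
have [[_ HA] [_ HB]] := d k.
move: HA HB; rewrite /trace => -> ->.
by rewrite !mulr1.
Qed.

End Cone.
End Lin.

Lemma nlt_swap (m n : nat) : m != n -> ~~ (m < n)%N = (n < m)%N.
Proof. move=> H; apply/idP/idP; lia. Qed.

Lemma edges_card (V : finType) (e : rel V) : simple_graph e ->
  #|[set xy : (V * V)%type | e xy.1 xy.2]| = (2 * #|edges e|)%N.
Proof.
move=> [Hirr Hsym].
set P := [set xy : (V * V)%type | e xy.1 xy.2].
set B := [set xy : (V * V)%type | (enum_rank xy.1 < enum_rank xy.2)%N].
have Hne : forall x y, e x y -> (enum_rank x : nat) != enum_rank y.
  move=> x y Hxy; apply/negP => /eqP /ord_inj /enum_rank_inj Exy.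
  by subst; move: (Hirr y); rewrite Hxy.
have h1 : #|P :\: B| = #|P :&: B|.
  have swapK : involutive (fun xy : (V * V)%type => (xy.2, xy.1)) by case.
  rewrite -(card_preimset (P :&: B) (inv_inj swapK)).
  have -> // : P :\: B = (fun xy : (V * V)%type => (xy.2, xy.1)) @^-1: (P :&: B).
  apply/setP => -[x y]; rewrite !inE /= Hsym.
  case Exy: (e y x); rewrite ?andbF ?andbT //.
  by apply: nlt_swap; rewrite eq_sym; apply: Hne.
have h2 : #|edges e| = #|P :&: B|.
  rewrite /edges -/P.
  have -> : [set [set x.1; x.2] | x in P] = [set [set x.1; x.2] | x in P :&: B].
    apply/eqP; rewrite eqEsubset; apply/andP; split; last first.
      by apply: imsetS; apply: subsetIl.
    apply/subsetP => S /imsetP [[x y] Pxy ->].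
    case: (boolP ((x, y) \in B)) => HB.
      by apply: imset_f; rewrite inE Pxy HB.
    apply/imsetP; exists (y, x); last by rewrite /= setUC.
    move: Pxy HB; rewrite !inE /= Hsym => Exy HB; rewrite Exy /=.
    by rewrite -nlt_swap // eq_sym; apply: Hne.
  apply: card_in_imset => -[a1 a2] [b1 b2]; rewrite !inE /=.
  move=> /andP [Ea La] /andP [Eb Lb] Hs.
  have : a1 \in [set b1; b2] by rewrite -Hs !inE eqxx.
  have : a2 \in [set b1; b2] by rewrite -Hs !inE eqxx orbT.
  rewrite !inE => /orP [] /eqP H2 /orP [] /eqP H1; subst => //; lia.
have := cardsID B P; rewrite h1 -h2 => <-; lia.
Qed.

Section Final.
Variable C : numClosedFieldType.

Lemma sum_if_eq (I : finType) (z : I) (f : I -> C) :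
  \sum_w (if z == w then f w else 0) = f z.
Proof.
rewrite (bigD1 z) //= eqxx big1 ?addr0 // => w /negbTE.
by rewrite eq_sym => ->.
Qed.

Lemma sum_card (I : finType) (r : pred I) :
  \sum_w (if r w then (1 : C) else 0) = #|[set w | r w]|%:R.
Proof.
rewrite -big_mkcond sumr_const; congr (_ *+ _).
by apply: eq_card => w; rewrite !inE.
Qed.

Lemma lap_row (V : finType) (e : rel V) z : \sum_w laplacian C e z w = 0.
Proof. by rewrite /laplacian sumrB sum_if_eq sum_card subrr. Qed.

Lemma lap_ptrans_row (p q : nat) (e : rel (vert p q)) z :
  \sum_w laplacian C e (z.1, w.2) (w.1, z.2) = (deg e z)%:R - (deg (ptrans e) z)%:R.
Proof.
case: z => z1 z2; rewrite /laplacian sumrB.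
congr (_ - _).
  rewrite -(sum_if_eq (z1, z2) (fun w : vert p q => (deg e (z1, w.2))%:R)).
  apply: eq_bigr => -[w1 w2] _ /=.
  by rewrite !xpair_eqE [w2 == z2]eq_sym.
by rewrite sum_card.
Qed.


Lemma sum2_ind_l (I : finType) (a : I) (F : I -> I -> C) :
  \sum_x \sum_y ind C (x == a) * F x y = \sum_y F a y.
Proof.
under eq_bigr => x _ do rewrite -mulr_sumr.
by rewrite sum_ind.
Qed.

Lemma sum2_ind_r (I : finType) (a : I) (F : I -> I -> C) :
  \sum_x \sum_y ind C (y == a) * F x y = \sum_x F x a.
Proof. by apply: eq_bigr => x _; rewrite sum_ind. Qed.

Lemma sum_deg (V : finType) (e : rel V) z : \sum_y ind C (e z y) = (deg e z)%:R.
Proof. by rewrite /deg -sum_card. Qed.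

Definition Ledge (V : finType) (x y : V) : op C V :=
  fun z w => (ind C (z == x) - ind C (z == y)) * (ind C (w == x) - ind C (w == y)).

Lemma lap_decomp (V : finType) (e : rel V) : (forall x y, e x y = e y x) ->
  forall z w, laplacian C e z w = 2^-1 * \sum_x \sum_y ind C (e x y) * Ledge x y z w.
Proof.
move=> Hsym z w.
have S1 : \sum_x \sum_y ind C (e x y) * (ind C (z == x) * ind C (w == x)) =
          ind C (w == z) * (deg e z)%:R.
  transitivity (\sum_x \sum_y ind C (x == z) * (ind C (w == x) * ind C (e x y))).
    apply: eq_bigr => x _; apply: eq_bigr => y _; rewrite [z == x]eq_sym; ring.
  by rewrite sum2_ind_l -mulr_sumr sum_deg.
have S2 : \sum_x \sum_y ind C (e x y) * (ind C (z == y) * ind C (w == y)) =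
          ind C (w == z) * (deg e z)%:R.
  transitivity (\sum_x \sum_y ind C (y == z) * (ind C (w == y) * ind C (e y x))).
    apply: eq_bigr => x _; apply: eq_bigr => y _; rewrite [z == y]eq_sym Hsym; ring.
  by rewrite sum2_ind_r -mulr_sumr sum_deg.
have S3 : \sum_x \sum_y ind C (e x y) * (ind C (z == x) * ind C (w == y)) =
          ind C (e z w).
  transitivity (\sum_x \sum_y ind C (x == z) * (ind C (y == w) * ind C (e x y))).
    apply: eq_bigr => x _; apply: eq_bigr => y _; rewrite [z == x]eq_sym [w == y]eq_sym; ring.
  by rewrite sum2_ind_l sum_ind.
have S4 : \sum_x \sum_y ind C (e x y) * (ind C (z == y) * ind C (w == x)) =
          ind C (e z w).
  transitivity (\sum_x \sum_y ind C (x == w) * (ind C (y == z) * ind C (e x y))).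
    apply: eq_bigr => x _; apply: eq_bigr => y _; rewrite [z == y]eq_sym [w == x]eq_sym; ring.
  by rewrite sum2_ind_l sum_ind Hsym.
have -> : \sum_x \sum_y ind C (e x y) * Ledge x y z w =
   \sum_x \sum_y ind C (e x y) * (ind C (z == x) * ind C (w == x))
 + \sum_x \sum_y ind C (e x y) * (ind C (z == y) * ind C (w == y))
 - \sum_x \sum_y ind C (e x y) * (ind C (z == x) * ind C (w == y))
 - \sum_x \sum_y ind C (e x y) * (ind C (z == y) * ind C (w == x)).
  have E : forall x y, ind C (e x y) * Ledge x y z w =
     ind C (e x y) * (ind C (z == x) * ind C (w == x))
   + ind C (e x y) * (ind C (z == y) * ind C (w == y))
   - ind C (e x y) * (ind C (z == x) * ind C (w == y))
   - ind C (e x y) * (ind C (z == y) * ind C (w == x)) by move=> x y; rewrite /Ledge; ring.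
  under eq_bigr => x _ do under eq_bigr => y _ do rewrite E.
  under eq_bigr => x _ do rewrite !sumrB big_split /=.
  by rewrite !sumrB big_split.
rewrite S1 S2 S3 S4 /laplacian [w == z]eq_sym.
rewrite /ind; case: (z == w); case: (e z w); (field; by rewrite ?pnatr_eq0).
Qed.


Lemma ind_and a b : ind C (a && b) = ind C a * ind C b.
Proof. by case: a; case: b; rewrite /ind ?mul1r ?mul0r. Qed.

Lemma ledge_swap (p q : nat) (e : rel (vert p q)) :
  (forall x y, ptrans e x y = e x y) -> forall z w,
  \sum_x \sum_y ind C (e x y) * Ledge x y z w =
  \sum_x \sum_y ind C (e x y) * Ledge (x.1, y.2) (y.1, x.2) z w.
Proof.
move=> Hpt z w.
rewrite (pair_bigA _ (fun x y => ind C (e x y) * Ledge x y z w)).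
rewrite (pair_bigA _ (fun x y => ind C (e x y) * Ledge (x.1, y.2) (y.1, x.2) z w)).
pose pi := fun xy : (vert p q * vert p q)%type =>
  ((xy.1.1, xy.2.2), (xy.2.1, xy.1.2)).
have piK : involutive pi by move=> [[x1 x2] [y1 y2]].
rewrite [RHS](reindex_inj (inv_inj piK)); apply: eq_bigr => -[[x1 x2] [y1 y2]] _ /=.
by rewrite -[e (x1, y2) (y1, x2)]/(ptrans e (x1, x2) (y1, y2)) Hpt.
Qed.

Definition T1 (p q : nat) (x y : vert p q) : op C (vert p q) :=
  tensor (rank1 (fun i => ind C (i == x.1) - ind C (i == y.1)))
         (rank1 (fun j => ind C (j == x.2) + ind C (j == y.2))).
Definition T2 (p q : nat) (x y : vert p q) : op C (vert p q) :=
  tensor (rank1 (fun i => ind C (i == x.1) + ind C (i == y.1)))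
         (rank1 (fun j => ind C (j == x.2) - ind C (j == y.2))).

Lemma ledge_ident (p q : nat) (x y z w : vert p q) :
  Ledge x y z w + Ledge (x.1, y.2) (y.1, x.2) z w = 2^-1 * (T1 x y z w + T2 x y z w).
Proof.
case: x y z w => [x1 x2] [y1 y2] [z1 z2] [w1 w2].
rewrite /T1 /T2 /tensor /rank1 /Ledge /= !rmorphB !rmorphD /= !conj_ind !xpair_eqE !ind_and.
by field; rewrite ?pnatr_eq0.
Qed.

End Final.

Theorem theorem3 (C : numClosedFieldType) (p q : nat) (e : rel (vert p q)) :
  nearest_point_graph e ->
  (exists x y, e x y) ->
  (separable (rhoG C e) <-> (forall v, deg e v = deg (ptrans e) v)).
Proof.
move=> He [x0 [y0 Exy]].
have HP := edges_card He.1.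
set E := #|edges e| in HP *.
have E0 : E != 0%N.
  apply/eqP => E0; move: HP; rewrite E0 muln0 => /eqP; rewrite cards_eq0 => /eqP H.
  by have := in_set0 (x0, y0); rewrite -H inE Exy.
have E2 : ((2 * E)%:R : C) != 0 by rewrite pnatr_eq0 muln_eq0.
have Hsym : forall x y, e x y = e y x by case: He => -[].
have Hirr : forall x, e x x = false by case: He => -[H _] _ x; apply: negbTE.
split.
- move=> Hsep v.
  have Hrow : forall z, \sum_w rhoG C e z w = 0.
    by move=> z; rewrite /rhoG -mulr_suml lap_row mul0r.
  have := sep_nec Hsep Hrow v.
  rewrite /rhoG -mulr_suml lap_ptrans_row -/E => /eqP.
  by rewrite mulf_eq0 invr_eq0 (negbTE E2) orbF subr_eq0 eqr_nat => /eqP.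
- move=> Hdeg.
  have Hpt := @ptrans_eq _ _ _ He Hdeg.
  apply: cone_sep.
  + pose c := 2^-1 * 2^-1 * 2^-1 / (2 * E)%:R : C.
    refine (@cone_ext C p q (fun z w => \sum_x \sum_y
        (c * ind C (e x y)) * (T1 C x y z w + T2 C x y z w)) (rhoG C e) _ _).
      move=> z w; symmetry; rewrite /rhoG lap_decomp // -/E.
      have -> : \sum_x \sum_y ind C (e x y) * Ledge C x y z w =
          2^-1 * \sum_x \sum_y ind C (e x y) * (Ledge C x y z w + Ledge C (x.1, y.2) (y.1, x.2) z w).
        transitivity (2^-1 * (\sum_x \sum_y ind C (e x y) * Ledge C x y z w +
            \sum_x \sum_y ind C (e x y) * Ledge C (x.1, y.2) (y.1, x.2) z w)).
          by rewrite -ledge_swap //; field; rewrite ?pnatr_eq0.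
        congr (_ * _); rewrite -big_split; apply: eq_bigr => x _.
        by rewrite -big_split; apply: eq_bigr => y _; rewrite mulrDr.
      transitivity ((2^-1 * 2^-1 / (2 * E)%:R) * \sum_x \sum_y ind C (e x y) *
           (Ledge C x y z w + Ledge C (x.1, y.2) (y.1, x.2) z w)).
        by ring.
      rewrite mulr_sumr; apply: eq_bigr => x _.
      rewrite mulr_sumr; apply: eq_bigr => y _.
      rewrite ledge_ident /c; ring.
    apply: (@cone_ext _ _ _ (fun z w => \sum_(x <- index_enum _)
        (fun x z w => \sum_y (c * ind C (e x y)) * (T1 C x y z w + T2 C x y z w)) x z w)) => //.
    apply: cone_sum => x.
    apply: (@cone_ext _ _ _ (fun z w => \sum_(y <- index_enum _)
        (fun y z w => (c * ind C (e x y)) * (T1 C x y z w + T2 C x y z w)) y z w)) => //.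
    apply: cone_sum => y /=.
    apply: coneZ.
      apply: mulr_ge0; last by rewrite /ind; case: (e x y).
      by rewrite /c; apply: divr_ge0 => //; rewrite ?invr_ge0 ?mulr_ge0 ?invr_ge0 ?ler0n.
    by apply: coneD; apply: cone_rank1.
  + rewrite /trace /rhoG -mulr_suml -/E.
    have -> : \sum_z laplacian C e z z = (2 * E)%:R.
      rewrite -HP.
      transitivity (\sum_z \sum_y ind C (e z y)).
        by apply: eq_bigr => z _; rewrite /laplacian eqxx Hirr subr0 sum_deg.
      rewrite (pair_bigA _ (fun z y => ind C (e z y))).
      by rewrite (sum_card C (fun xy : (vert p q * vert p q)%type => e xy.1 xy.2)).
    by rewrite divff.
Qed.
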